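(* For every $n\in\mathbb{N}$ and positive integer $m$, the number of divisors of $\{0,1,\ldots,n\}$ of cardinality exactly $m$ equals the number of headstrong compositions of $n+1$ with exactly $m$ parts.
   Context: A set $B\subseteq\mathbb{N}=\{0,1,\ldots\}$ is a divisor of $A$ if $B+C=A$ for some $C\subseteq\mathbb{N}$, where $B+C=\{b+c:b\in B,c\in C\}$. A composition of a positive integer $N$ is an ordered tuple $(c_1,\ldots,c_m)$ of positive integers summing to $N$ ($m$ parts); it is headstrong if $c_1\ge c_i$ for all $i$. *)

(* Defs.v *)
From mathcomp Require Import all_boot all_order.
From mathcomp Require Import finmap.
Set Implicit Arguments. Unset Strict Implicit. Unset Printing Implicit Defensive.
Local Open Scope fset_scope.

Definition sumset_eq (B : {fset nat}) (C : nat -> Prop) (A : nat -> Prop) : Prop :=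
  forall x, A x <-> exists b c, b \in B /\ C c /\ x = (b + c)%N.

Definition is_divisor (B : {fset nat}) (A : nat -> Prop) : Prop :=
  exists C : nat -> Prop, sumset_eq B C A.

Definition interval0 (n : nat) : nat -> Prop := fun x => x <= n.

Definition is_composition (N : nat) (s : seq nat) : bool :=
  all (fun c => 0 < c) s && (sumn s == N).

Definition headstrong (s : seq nat) : bool :=
  all (fun c => c <= head 0 s) s.

(* Number of headstrong compositions of N with exactly m parts.
   Every part of a composition of N is <= N, so parts are drawn from 'I_N.+1. *)
Definition num_headstrong_compositions (N m : nat) : nat :=
  #|[set t : m.-tuple 'I_N.+1 |
      is_composition N (map val t) && headstrong (map val t)]|.

(* Main.v *)
Require Import Defs.
From mathcomp Require Import all_boot all_order finmap zify.
Set Implicit Arguments. Unset Strict Implicit. Unset Printing Implicit Defensive.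

Fixpoint psa (a : nat) (g : seq nat) : seq nat :=
  if g is x :: g' then a :: psa (a + x) g' else [:: a].

Fixpoint gapsf (a : nat) (r : seq nat) : seq nat :=
  if r is y :: r' then (y - a) :: gapsf y r' else [::].

Lemma size_psa a g : size (psa a g) = (size g).+1.
Proof. by elim: g a => //= x g IH a; rewrite IH. Qed.

Lemma size_gapsf a r : size (gapsf a r) = size r.
Proof. by elim: r a => //= x r IH a; rewrite IH. Qed.

Lemma psa_bounds a g b : b \in psa a g -> a <= b <= a + sumn g.
Proof.
elim: g a => [|x g IH] a /=; first by rewrite inE addn0 => /eqP->; rewrite leqnn.
rewrite inE => /orP[/eqP->|/IH]; first by rewrite leqnn leq_addr.
by rewrite addnA => /andP[h1 ->]; rewrite (leq_trans (leq_addr _ _) h1).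
Qed.

Lemma psa_head a g : a \in psa a g.
Proof. by case: g => [|x g] /=; rewrite inE eqxx. Qed.

Lemma psa_last a g : a + sumn g \in psa a g.
Proof.
elim: g a => [|x g IH] a /=; first by rewrite addn0 inE.
by rewrite inE addnA IH orbT.
Qed.

Lemma psa_sorted a g : all (fun c => 0 < c) g -> sorted ltn (psa a g).
Proof.
elim: g a => [|x g IH] a //= /andP[hx hg].
have := IH (a + x) hg; case: g {IH hg} => [|y g] /=.
  by rewrite -{1}(addn0 a) ltn_add2l hx.
by move=> ->; rewrite -{1}(addn0 a) ltn_add2l hx.
Qed.

Lemma psa_uniq_pos a g : uniq (psa a g) -> all (fun c => 0 < c) g.
Proof.
elim: g a => [|x g IH] a //= /andP[ha hu].
rewrite (IH _ hu) andbT lt0n; apply/negP=> /eqP hx; move: ha.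
by rewrite hx addn0 psa_head.
Qed.

Lemma psa_hd a g : head 0 (psa a g) = a.
Proof. by case: g. Qed.

Lemma psa_inj a g1 g2 : psa a g1 = psa a g2 -> g1 = g2.
Proof.
elim: g1 a g2 => [|x1 g1 IH] a [|x2 g2] //=.
- by move/(congr1 size); rewrite /= size_psa.
- by move/(congr1 size); rewrite /= size_psa.
case=> h; have hh : a + x1 = a + x2.
  by have := congr1 (head 0) h; rewrite !psa_hd.
move/eqP: hh; rewrite eqn_add2l => /eqP hx; subst x2.
by rewrite (IH _ _ h).
Qed.

Lemma psa_gapsf a r : sorted leq (a :: r) -> psa a (gapsf a r) = a :: r.
Proof.
elim: r a => [|y r IH] a //= /andP[hay hp].
by rewrite subnKC // IH.
Qed.

Lemma cover_of_all a c g : 0 < c -> all (fun x => x <= c) g ->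
  forall y, a <= y < a + sumn g + c -> exists2 b, b \in psa a g & b <= y < b + c.
Proof.
move=> c0; elim: g a => [|x g IH] a /=.
  by move=> _ y; rewrite addn0 => hy; exists a; rewrite ?inE.
move=> /andP[hx hg] y /andP[hay hy].
case: (ltnP y (a + x)) => hyx.
  exists a; first by rewrite inE eqxx.
  by rewrite hay (leq_trans hyx) // leq_add2l.
have H2 : a + x <= y < a + x + sumn g + c by rewrite hyx -(addnA a x) hy.
have [b hb hb2] := IH (a + x) hg y H2.
by exists b => //; rewrite inE hb orbT.
Qed.

Lemma all_of_cover a c g :
  (forall y, a <= y < a + sumn g + c -> exists2 b, b \in psa a g & b <= y < b + c) ->
  all (fun x => x <= c) g.
Proof.
elim: g a => [|x g IH] a //= H.
have hxc : x <= c.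
  rewrite leqNgt; apply/negP => hcx.
  have H2 : a <= a + c < a + (x + sumn g) + c.
    by rewrite leq_addr /= -!addnA ltn_add2l (leq_trans hcx) // leq_addr.
  have [b hb /andP[hb1 hb2]] := H (a + c) H2.
  move: hb; rewrite inE => /orP[/eqP hb|/psa_bounds/andP[h1 _]].
    by move: hb2; rewrite hb ltnn.
  by move: (leq_trans h1 hb1); rewrite leq_add2l leqNgt hcx.
rewrite hxc /=; apply: (IH (a + x)) => y /andP[h1 h2].
have H2 : a <= y < a + (x + sumn g) + c.
  by rewrite (leq_trans (leq_addr x a) h1) /= (addnA a x).
have [b hb /andP[hb1 hb2]] := H y H2.
move: hb; rewrite inE => /orP[/eqP hb|hb]; last by exists b; rewrite ?hb1.
exists (a + x); first exact: psa_head.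
by rewrite h1 /= (leq_trans hb2) // hb -addnA leq_add2l leq_addl.
Qed.

Lemma divisor_props B n : is_divisor B (interval0 n) ->
  [/\ 0 \in B, (forall b, b \in B -> b <= n) &
   (forall M, M \in B -> forall y, y <= n -> exists2 b, b \in B & b <= y < b + (n.+1 - M))].
Proof.
move=> [C HC].
have [b0 [c0 [hb0 [hc0 e0]]]] := (proj1 (HC 0)) (leq0n n).
move: e0 => /esym/eqP; rewrite addn_eq0 => /andP[/eqP b00 /eqP c00].
subst b0 c0.
have bnd : forall b, b \in B -> b <= n.
  move=> b hb; have h1 := proj2 (HC b); apply: h1; exists b, 0; split => //; split => //; by rewrite addn0.
split => // M hM y hy.
have [b [c [hb [hc e]]]] := (proj1 (HC y)) hy.
exists b => //; rewrite e.
have h : M + c <= n.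
  have h1 := proj2 (HC (M + c)); apply: h1; exists M, c; split => //.
 lia.
Qed.

Lemma leq_sumn_mem (l : seq nat) x : x \in l -> x <= sumn l.
Proof.
elim: l => [|y l IH] //=; rewrite inE => /orP[/eqP->|/IH h]; first exact: leq_addr.
exact: leq_trans h (leq_addl _ _).
Qed.

Definition phiT (n m : nat) (t : m.-tuple 'I_n.+2) : {fset nat} :=
  [fset x in psa 0 (behead (map val t))]%fset.

Lemma tupH n m (t : m.-tuple 'I_n.+2) : 0 < m ->
  is_composition n.+1 (map val t) && headstrong (map val t) ->
  exists c g, [/\ map val t = c :: g, 0 < c, all (fun x => 0 < x) g,
     c + sumn g = n.+1 & all (fun x => x <= c) g].
Proof.
move=> hm; case E: (map val t) => [|c g].
  by move: (congr1 size E); rewrite size_map size_tuple /= => h; move: hm; rewrite h.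
rewrite /is_composition /headstrong /= => /andP[/andP[/andP[c0 gpos] /eqP hs] /andP[_ hg]].
by exists c, g; split.
Qed.

Lemma sorted_map_inord n (l : seq nat) : all (fun x => x <= n) l ->
  map val (map (@inord n) l) = l.
Proof. by elim: l => //= x l IH /andP[hx hl]; rewrite inordK ?IH. Qed.

Local Open Scope fset_scope.

Theorem mainTheorem19 (n m : nat) (hm : 0 < m) :
  exists s : seq {fset nat},
    uniq s /\
    (forall B : {fset nat}, B \in s <-> (is_divisor B (interval0 n) /\ #|` B| = m)) /\
    size s = num_headstrong_compositions n.+1 m.
Proof.
set H := [set t : m.-tuple 'I_(n.+1).+1 |
      is_composition n.+1 (map val t) && headstrong (map val t)].
exists (map (@phiT n m) (enum H)).
have fwd : forall t, t \in H -> exists c g, phiT t = [fset x in psa 0 g] /\ [/\ map val t = c :: g, 0 < c,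
     all (fun x => 0 < x) g, (c + sumn g)%N = n.+1 & all (fun x => x <= c) g].
  move=> t; rewrite inE => /(tupH hm) [c [g [E c0 gp hs hg]]].
  by exists c, g; split => //; rewrite /phiT E.
split; [|split].
- rewrite map_inj_in_uniq ?enum_uniq // => t1 t2; rewrite !mem_enum.
  move=> /fwd [c1 [g1 [-> [E1 c10 gp1 hs1 hg1]]]] /fwd [c2 [g2 [-> [E2 c20 gp2 hs2 hg2]]]] e.
  have ep : psa 0 g1 = psa 0 g2.
    apply: (irr_sorted_eq ltn_trans ltnn); rewrite ?psa_sorted //.
    by move=> x; have := congr1 (fun S : {fset nat} => x \in S) e; rewrite /= !inE.
  have eg := psa_inj ep; subst g2.
  have ec : c1 = c2 by lia.
  subst c2; apply: val_inj; apply: (inj_map val_inj); by rewrite E1 E2.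
- move=> B; split.
  + move=> /mapP [t]; rewrite mem_enum => /fwd [c [g [-> [E c0 gp hs hg]]]] ->.
    have su : sorted ltn (psa 0 g) by rewrite psa_sorted.
    split.
      exists (fun z => z < c) => x; rewrite /interval0; split.
        move=> hx; have [|b hb /andP[hb1 hb2]] := @cover_of_all 0 c g c0 hg x.
          by rewrite leq0n /= add0n addnC hs ltnS.
        exists b, (x - b); split; first by rewrite inE.
        split; [lia | lia].
      move=> [b [c' [hb [hc' ->]]]].
      move: hb; rewrite inE => /psa_bounds /andP[_ hb]; lia.
    rewrite card_fseq undup_id ?(sorted_uniq ltn_trans ltnn) // size_psa.
    have := congr1 size E; rewrite size_map size_tuple /= => ->.
    by [].
  + move=> [hdiv hcard].
    have [h0 hbnd hcov] := divisor_props hdiv.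
    have memL : forall x, (x \in sort leq (enum_fset B)) = (x \in B).
      by move=> x; rewrite mem_sort.
    have sL : sorted ltn (sort leq (enum_fset B)).
      by rewrite ltn_sorted_uniq_leq sort_uniq fset_uniq sort_sorted //; exact: leq_total.
    have sL' : sorted leq (sort leq (enum_fset B)) by apply: sort_sorted; exact: leq_total.
    have szL : size (sort leq (enum_fset B)) = m by rewrite size_sort.
    move: memL sL sL' szL; case: (sort leq (enum_fset B)) => [|h r] memL sL sL' szL.
      by move: h0; rewrite -memL.
    have h00 : h = 0.
      have : 0 \in h :: r by rewrite memL.
      have := order_path_min leq_trans sL'.
      rewrite inE => /allP hr /orP[/eqP -> //|/hr]; lia.
    subst h.
    have pg : psa 0 (gapsf 0 r) = 0 :: r by rewrite psa_gapsf.
    have hM : sumn (gapsf 0 r) \in B.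
      by have := psa_last 0 (gapsf 0 r); rewrite add0n pg memL.
    have Mn := hbnd _ hM.
    have c0 : 0 < n.+1 - sumn (gapsf 0 r) by rewrite subn_gt0 ltnS.
    have hg : all (fun x => x <= n.+1 - sumn (gapsf 0 r)) (gapsf 0 r).
      apply: (@all_of_cover 0) => y /andP[_ hy].
      have hy' : y <= n by lia.
      have [b hb hb2] := hcov _ hM y hy'.
      by exists b => //; rewrite pg memL.
    have gp : all (fun x => 0 < x) (gapsf 0 r).
      by apply: (@psa_uniq_pos 0); rewrite pg (sorted_uniq ltn_trans ltnn).
    have hsum : sumn ((n.+1 - sumn (gapsf 0 r)) :: gapsf 0 r) = n.+1.
      rewrite /=; lia.
    have lb : all (fun x => x <= n.+1) ((n.+1 - sumn (gapsf 0 r)) :: gapsf 0 r).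
      by apply/allP => x /leq_sumn_mem; rewrite hsum.
    have szl : size (map (@inord n.+1) ((n.+1 - sumn (gapsf 0 r)) :: gapsf 0 r)) == m.
      by rewrite size_map /= size_gapsf -szL.
    have ev : map val (Tuple szl) = (n.+1 - sumn (gapsf 0 r)) :: gapsf 0 r.
      exact: sorted_map_inord.
    apply/mapP; exists (Tuple szl).
      rewrite mem_enum inE ev /is_composition /headstrong /=.
      rewrite c0 gp leqnn hg /= andbT; apply/eqP; move: hsum; rewrite /=; lia.
    rewrite /phiT ev /=.
    apply/fsetP => x. rewrite inE pg memL //.
- by rewrite size_map -cardE.
Qed.
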